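(* Let $n\ge3$. The functional $F_n:\mathcal A_n\to\mathbb R$ attains its maximum value at a point $[\mu]\in\mathcal A_n$ if and only if $\mu$ is isomorphic to the commutative associative algebra $\mu_{ca}$ defined on a basis $\{X_1,\dots,X_n\}$ by $\mu_{ca}(X_1,X_1)=X_2$ (all other products of basis vectors zero). In this case $F_n([\mu])=20$.
   Context: $V_n$ is the space of bilinear maps $\mu:\mathbb C^n\times\mathbb C^n\to\mathbb C^n$ with standard Hermitian structures; $\mathcal A_n\subset\mathbb PV_n$ is the projectivization of the algebraic set of associative $\mu\in V_n$. $L^\mu_XY=\mu(X,Y)$, $R^\mu_XY=\mu(Y,X)$, $\mathrm M_\mu=2\sum_i L^\mu_{X_i}(L^\mu_{X_i})^*-2\sum_i (L^\mu_{X_i})^*L^\mu_{X_i}-2\sum_i (R^\mu_{X_i})^*R^\mu_{X_i}$ ($\{X_i\}$ orthonormal), $\|\mu\|^2=\sum_{i,j}\|\mu(X_i,X_j)\|^2$, $F_n([\mu])=\operatorname{tr}\mathrm M_\mu^2/\|\mu\|^4$. Isomorphism of algebras means lying in the same $\mathrm{GL}(n)$-orbit under $g.\mu(X,Y)=g\mu(g^{-1}X,g^{-1}Y)$. *)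

(* Defs.v *)
From HB Require Import structures.
From mathcomp Require Import all_boot all_order all_algebra.
From mathcomp Require Import complex.
From mathcomp Require Import reals.
Set Implicit Arguments. Unset Strict Implicit. Unset Printing Implicit Defensive.
Import Order.TTheory GRing.Theory Num.Theory.
Local Open Scope ring_scope.

(* C^n is represented by column vectors 'cV[R[i]]_n, with standard basis
   X_i = delta_mx i 0 (orthonormal for the standard Hermitian product). *)

(* A bilinear map mu : C^n x C^n -> C^n is given by its structure constants:
   mu(X_i, X_j) = \sum_k bl mu i j k X_k. *)
Definition bilin (R : realType) (n : nat) := 'I_n -> 'I_n -> 'I_n -> R[i].

Definition basis_vec (R : realType) (n : nat) (i : 'I_n) : 'cV[R[i]]_n :=
  delta_mx i 0.

Definition bl_app (R : realType) (n : nat) (mu : bilin R n)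
  (x y : 'cV[R[i]]_n) : 'cV[R[i]]_n :=
  \col_k \sum_i \sum_j x i 0 * y j 0 * mu i j k.

Definition associative_bl (R : realType) (n : nat) (mu : bilin R n) : Prop :=
  forall x y z : 'cV[R[i]]_n,
    bl_app mu (bl_app mu x y) z = bl_app mu x (bl_app mu y z).

Definition adj (R : realType) (n : nat) (A : 'M[R[i]]_n) : 'M[R[i]]_n :=
  map_mx (@conjc R) A^T.

(* L_{X_i} Y = mu(X_i, Y), R_{X_i} Y = mu(Y, X_i) as matrices in the basis *)
Definition Lmx (R : realType) (n : nat) (mu : bilin R n) (i : 'I_n) : 'M[R[i]]_n :=
  \matrix_(k, j) mu i j k.
Definition Rmx (R : realType) (n : nat) (mu : bilin R n) (i : 'I_n) : 'M[R[i]]_n :=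
  \matrix_(k, j) mu j i k.

Definition Mmu (R : realType) (n : nat) (mu : bilin R n) : 'M[R[i]]_n :=
  2%:R *: (\sum_i Lmx mu i *m adj (Lmx mu i))
  - 2%:R *: (\sum_i adj (Lmx mu i) *m Lmx mu i)
  - 2%:R *: (\sum_i adj (Rmx mu i) *m Rmx mu i).

Definition sqmod (R : realType) (z : R[i]) : R := complex.Re z ^+ 2 + complex.Im z ^+ 2.

Definition bl_norm2 (R : realType) (n : nat) (mu : bilin R n) : R :=
  \sum_i \sum_j \sum_k sqmod (mu i j k).

(* F_n([mu]) = tr(M_mu^2) / ||mu||^4  (tr M_mu^2 is real since M_mu is
   Hermitian; we take its real part) *)
Definition Fn (R : realType) (n : nat) (mu : bilin R n) : R :=
  complex.Re (\tr (Mmu mu *m Mmu mu)) / (bl_norm2 mu ^+ 2).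

Definition gl_act (R : realType) (n : nat) (g : 'M[R[i]]_n) (mu : bilin R n)
  : bilin R n :=
  fun i j k => (g *m bl_app mu (invmx g *m basis_vec R i)
                                (invmx g *m basis_vec R j)) k 0.

Definition isomorphic_bl (R : realType) (n : nat) (mu nu : bilin R n) : Prop :=
  exists g : 'M[R[i]]_n, g \in unitmx /\ gl_act g mu = nu.

(* mu_ca(X_1, X_1) = X_2, all other products of basis vectors zero
   (X_1, X_2 are the basis vectors of index 0 and 1) *)
Definition mu_ca (R : realType) (n : nat) : bilin R n :=
  fun i j k => if [&& (i == 0%N :> nat), (j == 0%N :> nat) & (k == 1%N :> nat)]
               then 1 else 0.

Definition in_An (R : realType) (n : nat) (mu : bilin R n) : Prop :=
  associative_bl mu /\ exists i j k, mu i j k <> 0.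

Definition is_max_An (R : realType) (n : nat) (mu : bilin R n) : Prop :=
  forall nu : bilin R n, in_An nu -> Fn nu <= Fn mu.

(* Main.v *)
Require Import Defs.
From HB Require Import structures.
From mathcomp Require Import all_boot all_order all_algebra.
From mathcomp Require Import complex.
From mathcomp Require Import reals.
From mathcomp Require Import ring lra.
From Stdlib Require Import FunctionalExtensionality.
Import Order.TTheory GRing.Theory Num.Theory.
Local Open Scope ring_scope.
Local Open Scope complex_scope.
Local Open Scope ring_scope.
Set Implicit Arguments. Unset Strict Implicit.
Local Notation cj := conjc.

Definition LagS (R : realType) (I : finType) (x y : I -> R[i]) : R[i] :=
  \sum_q \sum_q' (x q * y q' - x q' * y q) * cj (x q * y q' - x q' * y q).

Lemma lagrange (R : realType) (I : finType) (x y : I -> R[i]) :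
  LagS x y = 2%:R * ((\sum_l x l * cj (x l)) * (\sum_m y m * cj (y m))
     - (\sum_l x l * cj (y l)) * (\sum_m cj (x m) * y m)).
Proof.
rewrite /LagS.
pose P l m := x l * cj (x l) * (y m * cj (y m)).
pose Q l m := x l * cj (y l) * (cj (x m) * y m).
have e : forall l m, (x l * y m - x m * y l) * cj (x l * y m - x m * y l)
   = (P l m + P m l) - (Q l m + Q m l).
  by move=> l m; rewrite /P /Q !rmorphB !rmorphM /=; ring.
under eq_bigr do under eq_bigr do rewrite e.
under eq_bigr do rewrite sumrB !big_split /=.
rewrite sumrB !big_split /= [X in _ + X - _]exchange_big [X in _ - (_ + X)]exchange_big /=.
rewrite !big_distrlr /= -/P -/Q.
rewrite mulrBr; rewrite -!mulr2n mulr_natl.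
by rewrite mulr_natl.
Qed.

Lemma gram (R : realType) (K Q : finType) (w : K -> Q -> R[i]) :
  2%:R * (\sum_k \sum_l (\sum_q w k q * cj (w l q)) * (\sum_q w l q * cj (w k q)))
  = 2%:R * (\sum_k \sum_q w k q * cj (w k q)) ^+ 2 - \sum_k \sum_l LagS (w k) (w l).
Proof.
under [X in _ = _ - X]eq_bigr do under eq_bigr do rewrite lagrange.
rewrite expr2 big_distrlr /=.
under [X in _ = _ - X]eq_bigr do rewrite -mulr_sumr.
rewrite -mulr_sumr -mulrBr; congr (_ * _).
rewrite -sumrB; apply: eq_bigr => k _; rewrite -sumrB; apply: eq_bigr => l _.
rewrite opprB addrC subrK; congr (_ * _); apply: eq_bigr => q _; exact: mulrC.
Qed.

Lemma cross (R : realType) (K P Q : finType) (u : K -> P -> R[i]) (z : K -> Q -> R[i]) :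
  \sum_k \sum_l (\sum_p u k p * cj (u l p)) * (\sum_q cj (z l q) * z k q)
  = \sum_p \sum_q (\sum_k u k p * z k q) * cj (\sum_k u k p * z k q).
Proof.
transitivity (\sum_k \sum_l \sum_p \sum_q (u k p * z k q) * cj (u l p * z l q)).
  apply: eq_bigr => k _; apply: eq_bigr => l _; rewrite big_distrlr /=.
  apply: eq_bigr => p _; apply: eq_bigr => q _; rewrite rmorphM /=; ring.
rewrite exchange_big /=.
under eq_bigr do rewrite exchange_big /=.
under eq_bigr do under eq_bigr do rewrite exchange_big /=.
rewrite exchange_big /=; apply: eq_bigr => p _.
rewrite exchange_big /=; apply: eq_bigr => q _.
by rewrite rmorph_sum big_distrlr /= exchange_big.
Qed.

Definition Amx (R : realType) (n : nat) (mu : bilin R n) : 'M[R[i]]_n :=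
  \matrix_(k, l) \sum_i \sum_j mu i j k * cj (mu i j l).
Definition Dmx (R : realType) (n : nat) (mu : bilin R n) : 'M[R[i]]_n :=
  \matrix_(k, l) \sum_i \sum_m (cj (mu i k m) * mu i l m + cj (mu k i m) * mu l i m).

Lemma Mmu_E (R : realType) (n : nat) (mu : bilin R n) :
  Mmu mu = 2%:R *: (Amx mu - Dmx mu).
Proof.
apply/matrixP => k l; rewrite /Mmu !mxE !summxE.
under [X in _ = _ * (_ - X)]eq_bigr do rewrite big_split /=.
rewrite [X in _ = _ * (_ - X)]big_split /=.
rewrite mulrBr mulrDr opprD addrA.
congr (_ - _ - _); congr (_ * _); apply: eq_bigr => i _; rewrite !mxE;
  apply: eq_bigr => j _; rewrite !mxE //.
Qed.

Definition uA (R : realType) (n : nat) (mu : bilin R n) (k : 'I_n) (p : 'I_n * 'I_n) : R[i] :=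
  mu p.1 p.2 k.
Definition zD (R : realType) (n : nat) (mu : bilin R n) (k : 'I_n) (q : bool * ('I_n * 'I_n)) : R[i] :=
  if q.1 then mu q.2.1 k q.2.2 else mu k q.2.1 q.2.2.
Definition wD (R : realType) (n : nat) (mu : bilin R n) k q := cj (zD mu k q).
Definition Ncx (R : realType) (n : nat) (mu : bilin R n) : R[i] :=
  \sum_i \sum_j \sum_k mu i j k * cj (mu i j k).
Definition LA (R : realType) (n : nat) (mu : bilin R n) :=
  \sum_k \sum_l LagS (uA mu k) (uA mu l).
Definition LD (R : realType) (n : nat) (mu : bilin R n) :=
  \sum_k \sum_l LagS (wD mu k) (wD mu l).
Definition tau (R : realType) (n : nat) (mu : bilin R n) :=
  \sum_p \sum_q (\sum_k uA mu k p * zD mu k q) * cj (\sum_k uA mu k p * zD mu k q).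

Lemma sum_pair (R : realType) (n : nat) (F : 'I_n * 'I_n -> R[i]) :
  \sum_p F p = \sum_i \sum_j F (i, j).
Proof. by rewrite pair_bigA; apply: eq_bigr => -[]. Qed.

Lemma sum_bpair (R : realType) (n : nat) (F : bool * ('I_n * 'I_n) -> R[i]) :
  \sum_q F q = \sum_i \sum_j F (true, (i, j)) + \sum_i \sum_j F (false, (i, j)).
Proof.
transitivity (\sum_b \sum_p F (b, p)); first by rewrite pair_bigA; apply: eq_bigr => -[].
by rewrite big_bool /= !sum_pair.
Qed.

Lemma Amx_E (R : realType) (n : nat) (mu : bilin R n) k l :
  Amx mu k l = \sum_p uA mu k p * cj (uA mu l p).
Proof. by rewrite mxE sum_pair. Qed.

Lemma Dmx_E (R : realType) (n : nat) (mu : bilin R n) k l :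
  Dmx mu k l = \sum_q cj (zD mu k q) * zD mu l q.
Proof.
rewrite mxE sum_bpair /=.
under eq_bigr do rewrite big_split /=.
by rewrite big_split.
Qed.

Lemma tr_E (R : realType) (n : nat) (mu : bilin R n) :
  \tr (Mmu mu *m Mmu mu) = 20%:R * Ncx mu ^+ 2 - (2%:R * LA mu + 2%:R * LD mu + 8%:R * tau mu).
Proof.
set SAA := \sum_k \sum_l Amx mu k l * Amx mu l k.
set SAD := \sum_k \sum_l Amx mu k l * Dmx mu l k.
set SDA := \sum_k \sum_l Dmx mu k l * Amx mu l k.
set SDD := \sum_k \sum_l Dmx mu k l * Dmx mu l k.
have etr : \tr (Mmu mu *m Mmu mu) = 4%:R * (SAA - SAD - SDA + SDD).
  rewrite Mmu_E /mxtrace /SAA /SAD /SDA /SDD -!sumrB -big_split /= mulr_sumr.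
  apply: eq_bigr => k _; rewrite !mxE -!sumrB -big_split /= mulr_sumr.
  apply: eq_bigr => l _; rewrite !mxE; ring.
have hNA : \sum_k \sum_p uA mu k p * cj (uA mu k p) = Ncx mu.
  rewrite /Ncx exchange_big /=; rewrite sum_pair; apply: eq_bigr => i _.
  by apply: eq_bigr => j _.
have hND : \sum_k \sum_q wD mu k q * cj (wD mu k q) = 2%:R * Ncx mu.
  rewrite mulr2n mulrDl mul1r /Ncx.
  under eq_bigr do rewrite sum_bpair /=.
  rewrite big_split /=; congr (_ + _).
    rewrite exchange_big /=; apply: eq_bigr => i _; apply: eq_bigr => j _.
    apply: eq_bigr => k _; by rewrite /wD /zD /= conjcK mulrC.
  apply: eq_bigr => i _; apply: eq_bigr => j _; apply: eq_bigr => k _.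
  by rewrite /wD /zD /= conjcK mulrC.
have e1 : 2%:R * SAA = 2%:R * Ncx mu ^+ 2 - LA mu.
  rewrite -hNA /LA -gram /SAA; congr (_ * _); apply: eq_bigr => k _.
  by apply: eq_bigr => l _; rewrite !Amx_E; congr (_ * _); apply: eq_bigr => p _.
have e2 : 2%:R * SDD = 2%:R * (2%:R * Ncx mu) ^+ 2 - LD mu.
  rewrite -hND /LD -gram /SDD; congr (_ * _); apply: eq_bigr => k _.
  apply: eq_bigr => l _; rewrite !Dmx_E; congr (_ * _); apply: eq_bigr => p _;
  by rewrite /wD conjcK.
have e3 : SAD = tau mu.
  rewrite /tau -cross /SAD; apply: eq_bigr => k _; apply: eq_bigr => l _.
  by rewrite Amx_E Dmx_E.
have e4 : SDA = tau mu.
  rewrite -e3 /SDA /SAD exchange_big /=; apply: eq_bigr => k _; apply: eq_bigr => l _.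
  exact: mulrC.
have h2 : (2%:R : R[i]) != 0 by rewrite pnatr_eq0.
apply: (mulfI h2); rewrite etr e3 e4.
transitivity (4%:R * (2%:R * SAA) - 16%:R * tau mu + 4%:R * (2%:R * SDD)); first ring.
rewrite e1 e2; ring.
Qed.

Lemma sqmodE (R : realType) (z : R[i]) : z * cj z = (sqmod z)%:C.
Proof.
case: z => a b; rewrite /sqmod /=.
apply/eqP; rewrite eq_complex /=; apply/andP; split; apply/eqP; ring.
Qed.

Lemma Ncx_E (R : realType) (n : nat) (mu : bilin R n) : Ncx mu = (bl_norm2 mu)%:C.
Proof.
rewrite /Ncx /bl_norm2 !rmorph_sum; apply: eq_bigr => i _; rewrite rmorph_sum.
apply: eq_bigr => j _; rewrite rmorph_sum; apply: eq_bigr => k _; exact: sqmodE.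
Qed.

Lemma LagS_ge0 (R : realType) (I : finType) (x y : I -> R[i]) : 0 <= LagS x y.
Proof. by apply: sumr_ge0 => q _; apply: sumr_ge0 => q' _; apply: mulcJ_ge0. Qed.

Lemma LA_ge0 (R : realType) (n : nat) (mu : bilin R n) : 0 <= LA mu.
Proof. by apply: sumr_ge0 => k _; apply: sumr_ge0 => l _; apply: LagS_ge0. Qed.
Lemma LD_ge0 (R : realType) (n : nat) (mu : bilin R n) : 0 <= LD mu.
Proof. by apply: sumr_ge0 => k _; apply: sumr_ge0 => l _; apply: LagS_ge0. Qed.
Lemma tau_ge0 (R : realType) (n : nat) (mu : bilin R n) : 0 <= tau mu.
Proof. by apply: sumr_ge0 => k _; apply: sumr_ge0 => l _; apply: mulcJ_ge0. Qed.

Definition Edef (R : realType) (n : nat) (mu : bilin R n) :=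
  2%:R * LA mu + 2%:R * LD mu + 8%:R * tau mu.

Lemma Edef_ge0 (R : realType) (n : nat) (mu : bilin R n) : 0 <= Edef mu.
Proof.
by rewrite /Edef !addr_ge0 ?mulr_ge0 ?ler0n ?LA_ge0 ?LD_ge0 ?tau_ge0.
Qed.

Lemma ReB (R : realType) (x y : R[i]) : complex.Re (x - y) = complex.Re x - complex.Re y.
Proof. by case: x; case: y. Qed.

Lemma Fn_E (R : realType) (n : nat) (mu : bilin R n) :
  Fn mu = (20%:R * bl_norm2 mu ^+ 2 - complex.Re (Edef mu)) / bl_norm2 mu ^+ 2.
Proof.
rewrite /Fn tr_E -/(Edef mu) Ncx_E ReB; congr ((_ - _) / _).
by rewrite -rmorphXn -(rmorph_nat (real_complex R)) -rmorphM.
Qed.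

Lemma ge0_real (R : realType) (x : R[i]) : 0 <= x -> x = (complex.Re x)%:C.
Proof. move=> hx; have := ger0_Im hx; case: x {hx} => a b /= ->; done. Qed.

Lemma Fn_le20 (R : realType) (n : nat) (mu : bilin R n) : Fn mu <= 20%:R.
Proof.
rewrite Fn_E; have [->|hb] := eqVneq (bl_norm2 mu) 0.
  by rewrite expr0n /= invr0 mulr0 ler0n.
have hb2 : 0 < bl_norm2 mu ^+ 2 by rewrite exprn_even_gt0.
rewrite ler_pdivrMr // lerBlDr lerDl.
have := Edef_ge0 mu; by rewrite lecE /= => /andP[].
Qed.

Lemma Fn_eq20 (R : realType) (n : nat) (mu : bilin R n) :
  bl_norm2 mu != 0 -> (Fn mu = 20%:R <-> Edef mu = 0).
Proof.
move=> hb; have hb2 : bl_norm2 mu ^+ 2 != 0 by rewrite expf_neq0.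
rewrite Fn_E; split.
  move=> /(congr1 (fun t => t * bl_norm2 mu ^+ 2)); rewrite divfK // => h.
  rewrite (ge0_real (Edef_ge0 mu)).
  have -> : complex.Re (Edef mu) = 0 by move: h; set t := complex.Re _; set s := (20%:R * _); lra.
  done.
move=> ->; rewrite /= subr0 mulfK //.
Qed.

Lemma zz0 (R : realType) (z : R[i]) : z * cj z = 0 -> z = 0.
Proof. by move/eqP; rewrite mulf_eq0 conjc_eq0 orbb => /eqP. Qed.

Lemma Edef0 (R : realType) (n : nat) (mu : bilin R n) :
  Edef mu = 0 -> [/\ LA mu = 0, LD mu = 0 & tau mu = 0].
Proof.
move/eqP; rewrite /Edef.
have h2 : (0 : R[i]) <= 2%:R by rewrite ler0n.
have h8 : (0 : R[i]) <= 8%:R by rewrite ler0n.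
rewrite paddr_eq0 ?addr_ge0 ?mulr_ge0 ?LA_ge0 ?LD_ge0 ?tau_ge0 //.
rewrite paddr_eq0 ?mulr_ge0 ?LA_ge0 ?LD_ge0 //.
rewrite !mulf_eq0 !pnatr_eq0 /= => /andP[/andP[/eqP -> /eqP ->] /eqP ->]; done.
Qed.

Lemma LD0_rel (R : realType) (n : nat) (mu : bilin R n) : LD mu = 0 ->
  forall k l q q', zD mu k q * zD mu l q' = zD mu k q' * zD mu l q.
Proof.
move=> h k l q q'.
have h1 := psumr_eq0P (fun k _ => sumr_ge0 _ (fun l _ => LagS_ge0 (wD mu k) (wD mu l))) h (isT : true) (i := k).
have h2 := psumr_eq0P (fun l _ => LagS_ge0 (wD mu k) (wD mu l)) h1 (isT : true) (i := l).
have h3 := psumr_eq0P (fun q _ => sumr_ge0 _ (fun q' _ => mulcJ_ge0 _)) h2 (isT : true) (i := q).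
have h4 := psumr_eq0P (fun q' _ => mulcJ_ge0 _) h3 (isT : true) (i := q').
move/zz0/eqP: h4; rewrite subr_eq0 /wD -!rmorphM /= => /eqP /(congr1 cj).
by rewrite !conjcK.
Qed.

Lemma tau0_rel (R : realType) (n : nat) (mu : bilin R n) : tau mu = 0 ->
  forall p q, \sum_k uA mu k p * zD mu k q = 0.
Proof.
move=> h p q.
have h1 := psumr_eq0P (fun p _ => sumr_ge0 _ (fun q _ => mulcJ_ge0 _)) h (isT : true) (i := p).
have h2 := psumr_eq0P (fun q _ => mulcJ_ge0 _) h1 (isT : true) (i := q).
exact: zz0 h2.
Qed.

Definition RO (R : realType) (n : nat) (mu : bilin R n) (f v : 'I_n -> R[i]) :=
  (forall i j k, mu i j k = f i * f j * v k) /\ \sum_k f k * v k = 0.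

Lemma rel_RO (R : realType) (n : nat) (mu : bilin R n) a b c :
  LD mu = 0 -> tau mu = 0 -> mu a b c != 0 -> exists f v, RO mu f v.
Proof.
move=> hLD htau hm; set m := mu a b c in hm.
have r := LD0_rel hLD; have t := tau0_rel htau.
have e1 i j k : mu i j k * m = mu a j c * mu i b k.
  exact: (r j b (true, (i, k)) (true, (a, c))).
have e2 i k : mu i b k * m = mu i b c * mu a b k.
  exact: (r i a (false, (b, k)) (false, (b, c))).
have e3 j : mu a j c * mu b b c = mu j b c * m.
  exact: (r j b (true, (a, c)) (false, (b, c))).
pose f i := mu a i c.
pose v k := mu b b c * mu a b k / m ^+ 3.
have hm3 : m ^+ 3 != 0 by rewrite expf_neq0.
have form : forall i j k, mu i j k = f i * f j * v k.
  move=> i j k; apply: (mulfI hm3).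
  have -> : m ^+ 3 * (f i * f j * v k) = f i * f j * (mu b b c * mu a b k).
    by rewrite /v [m ^+ 3 * _]mulrC -!mulrA mulVf // mulr1.
  transitivity (m ^+ 2 * (mu i j k * m)); first by ring.
  rewrite e1; transitivity (m * f j * (mu i b k * m)); first by rewrite /f; ring.
  rewrite e2; transitivity (f j * mu a b k * (mu i b c * m)); first by rewrite /f; ring.
  by rewrite -e3 /f; ring.
exists f, v; split => //.
have := t (a, a) (true, (a, c)); rewrite /uA /zD /=.
under eq_bigr do rewrite !form.
have -> : \sum_(k < n) f a * f a * v k * (f a * f k * v c)
   = (f a ^+ 3 * v c) * \sum_k f k * v k.
  by rewrite mulr_sumr; apply: eq_bigr => k _; ring.
move/eqP; rewrite mulf_eq0 => /orP[|/eqP //].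
move: hm; rewrite /m form !mulf_eq0 /=.
by case: (f a == 0); case: (f b == 0); case: (mu b b c == 0); case: (mu a b c == 0); case: (m ^- 3 == 0).
Qed.

Lemma RO_E0 (R : realType) (n : nat) (mu : bilin R n) f v :
  RO mu f v -> Edef mu = 0.
Proof.
move=> [form orth].
have hz : forall k q, zD mu k q = f k * (f q.2.1 * v q.2.2).
  by move=> k [[] [i m]]; rewrite /zD /= form; ring.
have hLA : LA mu = 0.
  apply: big1 => k _; apply: big1 => l _; apply: big1 => p _; apply: big1 => p' _.
  have -> : uA mu k p * uA mu l p' - uA mu k p' * uA mu l p = 0.
    by rewrite /uA !form; ring.
  by rewrite mul0r.
have hLD : LD mu = 0.
  apply: big1 => k _; apply: big1 => l _; apply: big1 => p _; apply: big1 => p' _.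
  have -> : wD mu k p * wD mu l p' - wD mu k p' * wD mu l p = 0.
    rewrite /wD -!rmorphM -rmorphB /= !hz.
    have -> : f k * (f p.2.1 * v p.2.2) * (f l * (f p'.2.1 * v p'.2.2)) -
      f k * (f p'.2.1 * v p'.2.2) * (f l * (f p.2.1 * v p.2.2)) = 0 by ring.
    exact: conjc0.
  by rewrite mul0r.
have htau : tau mu = 0.
  apply: big1 => p _; apply: big1 => q _.
  have -> : \sum_k uA mu k p * zD mu k q = 0.
    transitivity ((f p.1 * f p.2 * (f q.2.1 * v q.2.2)) * \sum_k f k * v k).
      rewrite mulr_sumr; apply: eq_bigr => k _; rewrite hz /uA form; ring.
    by rewrite orth mulr0.
  by rewrite mul0r.
by rewrite /Edef hLA hLD htau !mulr0 !addr0.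
Qed.

Lemma glE (R : realType) (n : nat) (g : 'M[R[i]]_n) (mu : bilin R n) a b c :
  gl_act g mu a b c =
  \sum_k g c k * \sum_i \sum_j invmx g i a * invmx g j b * mu i j k.
Proof.
rewrite /gl_act mxE; apply: eq_bigr => k _; rewrite /bl_app /basis_vec -!colE !mxE.
by congr (_ * _); apply: eq_bigr => i _; apply: eq_bigr => j _; rewrite !mxE.
Qed.

Lemma sum_id (R : realType) (n : nat) (F : 'I_n -> R[i]) j :
  \sum_i (1%:M : 'M[R[i]]_n) i j * F i = F j.
Proof.
rewrite (bigD1 j) //= big1 ?addr0 => [|i hij]; rewrite mxE ?eqxx ?mul1r //.
by rewrite (negbTE hij) mul0r.
Qed.

Lemma sum_id' (R : realType) (n : nat) (F : 'I_n -> R[i]) j :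
  \sum_i (1%:M : 'M[R[i]]_n) j i * F i = F j.
Proof.
rewrite (bigD1 j) //= big1 ?addr0 => [|i hij]; rewrite mxE ?eqxx ?mul1r //.
by rewrite eq_sym (negbTE hij) mul0r.
Qed.

Lemma contrR (R : realType) (n : nat) (A B : 'M[R[i]]_n) (hAB : A *m B = 1%:M)
  (X : 'I_n -> R[i]) k' :
  \sum_c A k' c * \sum_k B c k * X k = X k'.
Proof.
transitivity (\sum_k (A *m B) k' k * X k); last by rewrite hAB sum_id'.
under eq_bigr do rewrite mulr_sumr.
rewrite exchange_big /=; apply: eq_bigr => k _; rewrite mxE mulr_suml.
by apply: eq_bigr => c _; rewrite mulrA.
Qed.

Lemma contrL (R : realType) (n : nat) (A B : 'M[R[i]]_n) (hBA : B *m A = 1%:M)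
  (Y : 'I_n -> R[i]) i' :
  \sum_a A a i' * \sum_i B i a * Y i = Y i'.
Proof.
transitivity (\sum_i (B *m A) i i' * Y i); last by rewrite hBA sum_id.
under eq_bigr do rewrite mulr_sumr.
rewrite exchange_big /=; apply: eq_bigr => i _; rewrite mxE mulr_suml.
by apply: eq_bigr => a _; rewrite mulrCA mulrA.
Qed.

Lemma gl_inv (R : realType) (n : nat) (g : 'M[R[i]]_n) (mu : bilin R n) :
  g \in unitmx -> forall i' j' k',
  mu i' j' k' = \sum_a \sum_b \sum_c g a i' * g b j' * invmx g k' c * gl_act g mu a b c.
Proof.
move=> hg i' j' k'.
have h1 := mulVmx hg.
transitivity (\sum_a \sum_b g a i' * g b j' *
   \sum_i \sum_j invmx g i a * invmx g j b * mu i j k'); last first.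
  apply: eq_bigr => a _; apply: eq_bigr => b _.
  symmetry; under eq_bigr do rewrite glE -mulrA.
  by rewrite -mulr_sumr (contrR h1 (fun k => \sum_i \sum_j invmx g i a * invmx g j b * mu i j k)).
transitivity (\sum_a g a i' * \sum_i invmx g i a *
   (\sum_b g b j' * \sum_j invmx g j b * mu i j k')); last first.
  apply: eq_bigr => a _; rewrite mulr_sumr.
  transitivity (\sum_i \sum_b g a i' * g b j' * (invmx g i a * \sum_j invmx g j b * mu i j k')).
    apply: eq_bigr => i _; rewrite !mulr_sumr; apply: eq_bigr => b _; ring.
  rewrite exchange_big /=; apply: eq_bigr => b _; rewrite !mulr_sumr.
  apply: eq_bigr => i _; rewrite !mulr_sumr; apply: eq_bigr => j _; ring.
rewrite (contrL h1).
by rewrite (contrL h1 (fun j => mu i' j k')).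
Qed.

Definition f0 (R : realType) (m : nat) (i : 'I_m.+2) : R[i] := ((i : nat) == 0%N)%:R.
Definition v1 (R : realType) (m : nat) (i : 'I_m.+2) : R[i] := ((i : nat) == 1%N)%:R.
Definition idx1 (m : nat) : 'I_m.+2 := Ordinal (isT : (1 < m.+2)%N).

Lemma mu_ca_RO (R : realType) (m : nat) : RO (@mu_ca R m.+2) (@f0 R m) (@v1 R m).
Proof.
split.
  move=> i j k; rewrite /mu_ca /f0 /v1.
  by case: ((i : nat) == 0%N); case: ((j : nat) == 0%N); case: ((k : nat) == 1%N);
    rewrite /= ?mul1r ?mul0r ?mulr0.
apply: big1 => k _; rewrite /f0 /v1.
by case: eqP => [->|]; rewrite ?mul0r ?mul1r.
Qed.

Lemma sum_f0 (R : realType) (m : nat) (F : 'I_m.+2 -> R[i]) :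
  \sum_a F a * @f0 R m a = F ord0.
Proof.
rewrite (bigD1 ord0) //= big1 ?addr0 => [|a ha]; rewrite /f0 ?eqxx ?mulr1 //.
suff -> : ((a : nat) == 0%N) = false by rewrite mulr0.
by apply/negbTE; move: ha; apply: contra => /eqP h; apply/eqP/val_inj.
Qed.

Lemma sum_v1 (R : realType) (m : nat) (F : 'I_m.+2 -> R[i]) :
  \sum_a F a * @v1 R m a = F (idx1 m).
Proof.
rewrite (bigD1 (idx1 m)) //= big1 ?addr0 => [|a ha]; rewrite /v1 ?eqxx ?mulr1 //.
suff -> : ((a : nat) == 1%N) = false by rewrite mulr0.
by apply/negbTE; move: ha; apply: contra => /eqP h; apply/eqP/val_inj.
Qed.

Lemma iso_RO (R : realType) (m : nat) (mu : bilin R m.+2) :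
  isomorphic_bl mu (@mu_ca R m.+2) -> exists f v, RO mu f v.
Proof.
move=> [g [hg hgl]].
have [form _] := mu_ca_RO R m.
exists (fun i => g ord0 i), (fun k => invmx g k (idx1 m)); split.
  move=> i j k; rewrite (gl_inv mu hg) hgl.
  transitivity (\sum_a g a i * f0 R a * \sum_b g b j * f0 R b * \sum_c invmx g k c * v1 R c).
    apply: eq_bigr => a _; rewrite mulr_sumr; apply: eq_bigr => b _.
    rewrite !mulr_sumr; apply: eq_bigr => c _; rewrite form; ring.
  rewrite -!mulr_suml (sum_f0 (fun a => g a i)) (sum_f0 (fun a => g a j)) (sum_v1 (fun a => invmx g k a)).
  by rewrite mulrA.
transitivity ((g *m invmx g) ord0 (idx1 m)); first by rewrite mxE.
by rewrite mulmxV // mxE.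
Qed.

Lemma constructE (R : realType) (N : nat) (u t : 'cV[R[i]]_N) (r : 'rV[R[i]]_N)
  (hru : (r *m u) 0 0 = 1) (hrt : (r *m t) 0 0 != 0) :
  (1%:M + (t - u) *m r) \in unitmx /\ (1%:M + (t - u) *m r) *m u = t.
Proof.
set X := (t - u) *m r.
split; last first.
  rewrite mulmxDl mul1mx /X -mulmxA (mx11_scalar (r *m u)) hru mulmx1.
  by rewrite addrC subrK.
set rho := (r *m (t - u)) 0 0.
have hrho : 1 + rho = (r *m t) 0 0.
  rewrite /rho mulmxBr; move: (r *m t) (r *m u) hru => A B hB; rewrite !mxE hB; ring.
set s := (1 + rho)^-1.
have hs : s * (1 + rho) = 1 by rewrite /s mulVf // hrho.
have XX : X *m X = rho *: X.
  rewrite /X mulmxA -(mulmxA (t - u)) (mx11_scalar (r *m (t - u))) -/rho.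
  by rewrite mul_mx_scalar scalemxAl.
suff h : (1%:M + X) *m (1%:M - s *: X) = 1%:M by case: (mulmx1_unit h).
rewrite mulmxDl mul1mx mulmxBr mulmx1 -scalemxAr XX.
clearbody X; apply/matrixP => i j; rewrite !mxE.
transitivity ((i == j)%:R + X i j * (1 - s * (1 + rho))); first by ring.
by rewrite hs subrr mulr0 addr0.
Qed.

Lemma exists_r (R : realType) (m : nat) (u : 'cV[R[i]]_m.+2) : u != 0 ->
  exists r : 'rV[R[i]]_m.+2, (r *m u) 0 0 = 1 /\ r 0 (idx1 m) != 0.
Proof.
move=> hu.
have [q hq] : exists q, u q 0 != 0.
  case: (pickP (fun q => u q 0 != 0)) => [q hq|h]; first by exists q.
  move/eqP: hu; case; apply/matrixP => i j; rewrite (ord1 j) mxE.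
  by move/negbFE/eqP: (h i).
have [h1|h1] := eqVneq (u (idx1 m) 0) 0; last first.
  exists ((u (idx1 m) 0)^-1 *: delta_mx 0 (idx1 m)); split.
    by rewrite -scalemxAl -rowE !mxE mulVf.
  by rewrite !mxE !eqxx mulr1 invr_eq0.
have hq1 : q != idx1 m by apply: contraNneq hq => ->; rewrite h1.
exists (delta_mx 0 (idx1 m) + (u q 0)^-1 *: delta_mx 0 q); split.
  by rewrite mulmxDl -scalemxAl -!rowE !mxE h1 mulVf // add0r.
by rewrite !mxE !eqxx /= [idx1 m == q]eq_sym (negbTE hq1) mulr0 addr0 oner_neq0.
Qed.

Lemma RO_iso (R : realType) (m : nat) (mu : bilin R m.+2) f v a b c :
  RO mu f v -> mu a b c != 0 -> isomorphic_bl mu (@mu_ca R m.+2).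
Proof.
move=> [form orth] habc.
have hfa : f a != 0 by move: habc; rewrite form !mulf_eq0 negb_or => /andP[/norP[]].
have hvc : v c != 0 by move: habc; rewrite form !mulf_eq0 negb_or => /andP[].
pose frow : 'rV[R[i]]_m.+2 := \row_i f i.
have hfrow : frow != 0.
  apply/eqP => h; move: hfa; have := congr1 (fun M : 'rV[R[i]]_m.+2 => M 0 a) h; rewrite !mxE => ->; by rewrite eqxx.
have hrank : \rank frow = 1%N by rewrite rank_rV hfrow.
pose Ce := col_ebase frow; pose Q := row_ebase frow.
have hf : forall i, f i = Ce 0 0 * Q 0 i.
  move=> i; have := mulmx_ebase frow; rewrite hrank -/Ce -/Q => /matrixP /(_ 0 i).
  move=> h; have -> : f i = frow 0 i by rewrite mxE.
  rewrite -h mxE (bigD1 0) //= big1 ?addr0.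
    by rewrite mxE big_ord1 !mxE /= mulr1.
  move=> l hl; rewrite mxE big_ord1 !mxE /=.
  have -> : (0%N == l :> nat) = false by rewrite eq_sym; apply/negbTE.
  by rewrite mulr0 mul0r.
have hc0 : Ce 0 0 != 0 by move: hfa; rewrite hf mulf_eq0 negb_or => /andP[].
pose c0 := Ce 0 0.
pose vcol : 'cV[R[i]]_m.+2 := \col_k v k.
pose u := Q *m vcol.
have hu0 : u 0 0 = 0.
  rewrite mxE; transitivity (c0^-1 * \sum_k f k * v k); last by rewrite orth mulr0.
  rewrite mulr_sumr; apply: eq_bigr => k _; rewrite hf mxE /c0.
  by rewrite !mulrA mulVf // mul1r.
have hu : u != 0.
  apply/eqP => h; move: hvc.
  have : vcol = invmx Q *m u by rewrite /u mulmxA mulVmx ?mul1mx // row_ebase_unit.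
  rewrite h mulmx0 => /matrixP /(_ c 0); rewrite mxE => ->; by rewrite mxE eqxx.
pose t : 'cV[R[i]]_m.+2 := c0 ^- 2 *: delta_mx (idx1 m) 0.
have [r [hr1 hr2]] := exists_r hu.
have hrt : (r *m t) 0 0 != 0.
  rewrite -scalemxAr -colE !mxE mulf_eq0 negb_or hr2 andbT.
  by rewrite invr_eq0 expf_neq0.
have [hE hEu] := constructE hr1 hrt.
set E := 1%:M + (t - u) *m r in hE hEu.
pose g := E *m Q.
have hg : g \in unitmx by rewrite unitmx_mul hE row_ebase_unit.
have ht0 : t 0 0 = 0 by rewrite !mxE /= mulr0.
have hE0 : forall j, E 0 j = (0 == j)%:R.
  move=> j; rewrite /E; move: (t) (u) ht0 hu0 => T U hT hU.
  rewrite !mxE big_ord1 !mxE hT hU subrr mul0r addr0 //.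
have hg0 : forall i, g 0 i = Q 0 i.
  move=> i; rewrite mxE (bigD1 0) //= big1 ?addr0.
    by rewrite hE0 eqxx mul1r.
  by move=> l hl; rewrite hE0 eq_sym (negbTE hl) mul0r.
have hgv : g *m vcol = t by rewrite /g -mulmxA.
exists g; split => //.
apply: functional_extensionality => a'; apply: functional_extensionality => b'; apply: functional_extensionality => c'.
rewrite glE.
have hgi : g *m invmx g = 1%:M by rewrite mulmxV.
have hsf : forall a0, \sum_i f i * invmx g i a0 = c0 * ((a0 : nat) == 0%N)%:R.
  move=> a0; transitivity (c0 * (g *m invmx g) 0 a0).
    rewrite mxE mulr_sumr; apply: eq_bigr => i _; rewrite hf hg0 mulrA //.
  by rewrite hgi mxE eq_sym -val_eqE.
have hsv : \sum_k g c' k * v k = c0 ^- 2 * ((c' : nat) == 1%N)%:R.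
  transitivity ((g *m vcol) c' 0); first by rewrite [RHS]mxE; apply: eq_bigr => k _; rewrite [vcol k 0]mxE.
  by rewrite hgv !mxE -val_eqE andbT.
transitivity ((\sum_i f i * invmx g i a') * (\sum_j f j * invmx g j b') * (\sum_k g c' k * v k)).
  rewrite mulr_sumr; apply: eq_bigr => k _.
  rewrite [RHS]mulrC -mulrA; congr (_ * _).
  rewrite big_distrlr mulr_sumr; apply: eq_bigr => i _.
  rewrite mulr_sumr; apply: eq_bigr => j _; rewrite form /=.
  move: (invmx g i a') (invmx g j b') (f i) (f j) (v k) => x1 x2 x3 x4 x5; ring.
rewrite !hsf hsv /mu_ca.
case: ((a' : nat) == 0%N); case: ((b' : nat) == 0%N); case: ((c' : nat) == 1%N);
  rewrite /= ?mulr0 ?mul0r ?mulr1 //.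
by rewrite /c0 -expr2 mulfV // expf_neq0.
Qed.

Lemma RO_bl (R : realType) (n : nat) (mu : bilin R n) f v x y k :
  RO mu f v -> bl_app mu x y k 0 = (\sum_i x i 0 * f i) * (\sum_j y j 0 * f j) * v k.
Proof.
move=> [form _]; rewrite mxE big_distrlr /= mulr_suml; apply: eq_bigr => i _.
rewrite mulr_suml; apply: eq_bigr => j _; rewrite form /=.
move: (x i 0) (y j 0) (f i) (f j) (v k) => x1 x2 x3 x4 x5; ring.
Qed.

Lemma RO_assoc (R : realType) (n : nat) (mu : bilin R n) f v :
  RO mu f v -> associative_bl mu.
Proof.
move=> hro x y z.
have [_ orth] := hro.
have h0 : forall x y, \sum_i bl_app mu x y i 0 * f i = 0.
  move=> x' y'; transitivity ((\sum_i x' i 0 * f i) * (\sum_j y' j 0 * f j) * \sum_k f k * v k).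
    rewrite mulr_sumr; apply: eq_bigr => k _; rewrite (RO_bl _ _ _ hro).
    move: (\sum_i x' i 0 * f i) (\sum_j y' j 0 * f j) (f k) (v k) => x1 x2 x3 x4; ring.
  by rewrite orth mulr0.
apply/matrixP => k j; rewrite (ord1 j) (RO_bl _ _ _ hro) (RO_bl _ _ _ hro).
by rewrite h0 h0 !mul0r mulr0 mul0r.
Qed.

Lemma bl_norm2_neq0 (R : realType) (n : nat) (mu : bilin R n) a b c :
  mu a b c <> 0 -> bl_norm2 mu != 0.
Proof.
move=> h; apply/eqP => h0; apply: h.
have ge : forall z : R[i], 0 <= sqmod z by move=> z; rewrite /sqmod addr_ge0 ?sqr_ge0.
have h1 := psumr_eq0P (fun i _ => sumr_ge0 _ (fun j _ => sumr_ge0 _ (fun k _ => ge (mu i j k)))) h0 (isT : true) (i := a).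
have h2 := psumr_eq0P (fun j _ => sumr_ge0 _ (fun k _ => ge (mu a j k))) h1 (isT : true) (i := b).
have h3 := psumr_eq0P (fun k _ => ge (mu a b k)) h2 (isT : true) (i := c).
by apply: zz0; rewrite sqmodE h3.
Qed.

Unset Implicit Arguments.

Theorem theorem4p9 (R : realType) (n : nat) (hn : (3 <= n)%N)
  (mu : bilin R n) (hmu : in_An mu) :
  (is_max_An mu <-> isomorphic_bl mu (@mu_ca R n)) /\
  (is_max_An mu -> Fn mu = 20%:R).
Proof.
case: n hn mu hmu => [|[|m]] // hn mu [hass [a [b [c habc]]]].
have hb : bl_norm2 mu != 0 := bl_norm2_neq0 habc.
have hroca := mu_ca_RO R m.
have hca1 : @mu_ca R m.+2 ord0 ord0 (idx1 m) <> 0 by rewrite /mu_ca /=; apply/eqP; rewrite oner_eq0.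
have caAn : in_An (@mu_ca R m.+2).
  by split; [exact: RO_assoc hroca | exists ord0, ord0, (idx1 m)].
have Fca : Fn (@mu_ca R m.+2) = 20%:R.
  by apply/(Fn_eq20 (bl_norm2_neq0 hca1)); exact: RO_E0 hroca.
have max20 : is_max_An mu -> Fn mu = 20%:R.
  move=> hmax; apply/eqP; rewrite eq_le Fn_le20 /=; rewrite -Fca; exact: hmax.
have habc' : mu a b c != 0 by apply/eqP.
split=> //; split.
  move=> /max20 /(Fn_eq20 hb) /Edef0 [_ hLD htau].
  have [f [v hro]] := rel_RO hLD htau habc'.
  exact: RO_iso hro habc'.
move=> /iso_RO [f [v hro]] nu _.
have -> : Fn mu = 20%:R by apply/(Fn_eq20 hb); exact: RO_E0 hro.
exact: Fn_le20.
Qed.
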